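(* (1) In every model of $\mathsf{Md}_\bot$ satisfying $\mathsf{NVL}$: for all $x,y$, if $x\cdot y=\bot$ and $x\neq\bot$ then $y=\bot$. (2) In every model of $\mathsf{Md}_\bot$ satisfying $\mathsf{NVL}$: for all $x$, if $x^{-1}\neq\bot$ then $0\cdot x=0$. (3) Every model of $\mathsf{Md}_\bot$ satisfying $\mathsf{NVL}$ and $\mathsf{AVL}$ satisfies $\mathsf{CIL}$. (4) Every model of $\mathsf{Md}_\bot$ satisfying $\mathsf{CIL}$ satisfies $\mathsf{NVL}$. (5) Every model of $\mathsf{Md}_\bot$ satisfying $\mathsf{CIL}$ satisfies $\mathsf{AVL}$.
   Context: The signature has one sort, constants $0,1,\bot$, binary operations $+,\cdot$ and unary operations $-$ and $(\,\cdot\,)^{-1}$. $\mathsf{Md}_\bot$ is the set of equations (variables universally quantified): $(x+y)+z=x+(y+z)$; $x+y=y+x$; $x+0=x$; $x+(-x)=0\cdot x$; $(x\cdot y)\cdot z=x\cdot(y\cdot z)$; $x\cdot y=y\cdot x$; $1\cdot x=x$; $x\cdot(y+z)=x\cdot y+x\cdot z$; $-(-x)=x$; $0\cdot(x\cdot x)=0\cdot x$; $(x^{-1})^{-1}=x+0\cdot x^{-1}$; $x\cdot x^{-1}=1+0\cdot x^{-1}$; $(x\cdot y)^{-1}=x^{-1}\cdot y^{-1}$; $1^{-1}=1$; $0^{-1}=\bot$; $x+\bot=\bot$; $x\cdot\bot=\bot$. Normal Value Law $\mathsf{NVL}$: $\forall x\,(x\neq\bot\rightarrow 0\cdot x=0)$.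 Additional Value Law $\mathsf{AVL}$: $\forall x\,(x^{-1}=\bot\rightarrow 0\cdot x=x)$. Common Inverse Law $\mathsf{CIL}$: $\forall x\,(x\neq 0\wedge x\neq\bot\rightarrow x\cdot x^{-1}=1)$. *)

(* Defs.v *)
Record MdBot : Type := {
  car :> Type;
  zero : car;
  one : car;
  bot : car;
  add : car -> car -> car;
  mul : car -> car -> car;
  opp : car -> car;
  inv : car -> car;
  ax_addA : forall x y z, add (add x y) z = add x (add y z);
  ax_addC : forall x y, add x y = add y x;
  ax_add0 : forall x, add x zero = x;
  ax_addN : forall x, add x (opp x) = mul zero x;
  ax_mulA : forall x y z, mul (mul x y) z = mul x (mul y z);
  ax_mulC : forall x y, mul x y = mul y x;
  ax_mul1 : forall x, mul one x = x;
  ax_mulDr : forall x y z, mul x (add y z) = add (mul x y) (mul x z);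
  ax_oppK : forall x, opp (opp x) = x;
  ax_zero_sq : forall x, mul zero (mul x x) = mul zero x;
  ax_invK : forall x, inv (inv x) = add x (mul zero (inv x));
  ax_mulV : forall x, mul x (inv x) = add one (mul zero (inv x));
  ax_invM : forall x y, inv (mul x y) = mul (inv x) (inv y);
  ax_inv1 : inv one = one;
  ax_inv0 : inv zero = bot;
  ax_addbot : forall x, add x bot = bot;
  ax_mulbot : forall x, mul x bot = bot
}.

Arguments zero {m}.
Arguments one {m}.
Arguments bot {m}.
Arguments add {m} _ _.
Arguments mul {m} _ _.
Arguments opp {m} _.
Arguments inv {m} _.

Definition NVL (M : MdBot) : Prop :=
  forall x : M, x <> bot -> mul zero x = zero.

Definition AVL (M : MdBot) : Prop :=
  forall x : M, inv x = bot -> mul zero x = x.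

Definition CIL (M : MdBot) : Prop :=
  forall x : M, x <> zero /\ x <> bot -> mul x (inv x) = one.

(* Main.v *)
Require Import Defs.
From Stdlib Require Import Classical.

Section L.
Variable M : MdBot.

Lemma zbot : mul (@zero M) bot = bot.
Proof. apply ax_mulbot. Qed.

Lemma botmul (x : M) : mul bot x = bot.
Proof. rewrite ax_mulC. apply ax_mulbot. Qed.

Lemma zero_is_bot_all : (@zero M) = bot -> forall x : M, x = bot.
Proof. intros H x. rewrite <- (ax_add0 M x), H. apply ax_addbot. Qed.

Lemma zone : mul (@zero M) one = zero.
Proof. rewrite ax_mulC. apply ax_mul1. Qed.

Lemma zz : mul (@zero M) zero = zero.
Proof.
  set (b := @opp M one).
  assert (H1 : add one b = zero) by (unfold b; rewrite ax_addN; apply zone).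
  assert (Hb : mul zero b = zero).
  { rewrite <- ax_addN. unfold b at 2. rewrite ax_oppK. rewrite ax_addC. exact H1. }
  rewrite <- H1 at 2. rewrite ax_mulDr, zone, Hb. apply ax_add0.
Qed.
End L.

Theorem proposition2p6 :
  (forall M : MdBot, NVL M ->
     forall x y : M, mul x y = bot -> x <> bot -> y = bot) /\
  (forall M : MdBot, NVL M ->
     forall x : M, inv x <> bot -> mul zero x = zero) /\
  (forall M : MdBot, NVL M -> AVL M -> CIL M) /\
  (forall M : MdBot, CIL M -> NVL M) /\
  (forall M : MdBot, CIL M -> AVL M).
Proof.
  split; [|split; [|split; [|split]]].
  - intros M N x y H Hx.
    destruct (classic (y = bot)) as [|Hy]; [assumption|exfalso].
    assert (E : mul zero (mul x y) = zero).
    { rewrite <- ax_mulA, (N x Hx). apply (N y Hy). }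
    rewrite H, zbot in E. apply Hx. apply zero_is_bot_all. symmetry; exact E.
  - intros M N x Hx.
    destruct (classic (x = bot)) as [E|Hb]; [exfalso|apply N; exact Hb].
    apply Hx. subst x. rewrite <- (zbot M) at 1.
    rewrite ax_invM, ax_inv0. apply botmul.
  - intros M N A x [H0 Hb].
    rewrite ax_mulV.
    destruct (classic (inv x = bot)) as [E|Hi].
    + exfalso. apply H0. rewrite <- (A x E). apply N; exact Hb.
    + rewrite (N _ Hi). apply ax_add0.
  - intros M C x Hb.
    destruct (classic (x = zero)) as [E|Hz]; [subst x; apply zz|].
    assert (H1 := C x (conj Hz Hb)).
    assert (E1 : mul zero x = mul (mul zero x) (mul x (inv x))) by
      (rewrite H1, (ax_mulC _ (mul zero x) one); symmetry; apply ax_mul1).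
    rewrite E1, <- ax_mulA, (ax_mulA _ zero x x), ax_zero_sq, ax_mulA, H1. apply zone.
  - intros M C x Hi.
    destruct (classic (x = bot)) as [E|Hb]; [subst x; apply zbot|].
    destruct (classic (x = zero)) as [E|Hz]; [subst x; apply zz|].
    exfalso. assert (H1 := C x (conj Hz Hb)). rewrite Hi, ax_mulbot in H1.
    apply Hb. rewrite <- (ax_mul1 M x), <- H1. apply botmul.
Qed.
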